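(* For every integer $n\ge0$, $$\mathfrak{C}_n(x)=\sum_{k=0}^{n}k!\,x^k\sum_{j=0}^{n}\binom nj\left(-\frac k2\right)^j S(n-j,k),$$ where $S(m,k)$ denotes the Stirling numbers of the second kind (with $S(m,k)=0$ for $k>m$).
   Context: For $n\ge1$ the central factorial is $x^{[n]}=x\,(x+\tfrac n2-1)(x+\tfrac n2-2)\cdots(x-\tfrac n2+1)$ (a product of $n$ factors), and $x^{[0]}=1$. The central factorial numbers of the second kind $T(n,k)$ ($0\le k\le n$) are defined by $x^n=\sum_{k=0}^n T(n,k)\,x^{[k]}$; equivalently $T(n,k)=\frac1{k!}\sum_{j=0}^k(-1)^j\binom kj\left(\frac k2-j\right)^n$, and $T(n,k)=0$ for $k>n$. The $n$th central Fubini-like polynomial is $\mathfrak{C}_n(x)=\sum_{k=0}^n k!\,T(n,k)\,x^k$. Stirling numbers of the second kind are defined by $x^n=\sum_k S(n,k)\,x(x-1)\cdots(x-k+1)$. *)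

(* Defs.v *)
From HB Require Import structures.
From mathcomp Require Import all_boot all_order all_algebra.
Set Implicit Arguments. Unset Strict Implicit. Unset Printing Implicit Defensive.
Import Order.TTheory GRing.Theory Num.Theory.
Local Open Scope ring_scope.

Definition cfT (n k : nat) : rat :=
  (k`!%:R)^-1 * \sum_(j < k.+1) (-1) ^+ j * ('C(k, j))%:R * ((k%:R / 2%:R) - j%:R) ^+ n.

Fixpoint stirling2 (n k : nat) : nat :=
  match n, k with
  | 0, 0 => 1
  | 0, _.+1 => 0
  | _.+1, 0 => 0
  | n'.+1, k'.+1 => k'.+1 * stirling2 n' k'.+1 + stirling2 n' k'
  end.

Definition centralFubini (n : nat) : {poly rat} :=
  \sum_(k < n.+1) ((k`!%:R * cfT n k) *: 'X^k).

(* Main.v *)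
Require Import Defs.
From HB Require Import structures.
From mathcomp Require Import all_boot all_order all_algebra.
From mathcomp Require Import ring.
Import Order.TTheory GRing.Theory Num.Theory.
Local Open Scope ring_scope.

Definition ff (m k : nat) : rat :=
  \sum_(i < k.+1) (-1) ^+ i * ('C(k, i))%:R * (k%:R - i%:R) ^+ m.

Lemma ffA m k : ff m k.+1 + ff m k =
  \sum_(i < k.+1) (-1) ^+ i * ('C(k, i))%:R * (k.+1%:R - i%:R) ^+ m.
Proof.
have H : \sum_(i < k.+2) (-1) ^+ i * ('C(k, i))%:R * (k.+1%:R - i%:R) ^+ m =
  \sum_(i < k.+1) (-1) ^+ i * ('C(k, i))%:R * (k.+1%:R - i%:R) ^+ m :> rat.
  by rewrite big_ord_recr /= bin_small // mulr0 mul0r addr0.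
rewrite -H big_ord_recl /= /ff big_ord_recl /=.
under eq_bigr => i _ do rewrite /bump /= binS natrD mulrDr mulrDl.
rewrite big_split /= !bin0 -!addrA; congr (_ + _).
have -> : \sum_(i < k.+1) (-1) ^+ (1 + i) * 'C(k, i)%:R * (k.+1%:R - (1 + i)%:R) ^+ m
   = - ff m k.
  rewrite /ff -sumrN; apply: eq_bigr => i _.
  have -> : (k.+1%:R - (1 + i)%:R) = (k%:R - i%:R :> rat).
    by rewrite natrD !mulrS; ring.
  by rewrite exprS; ring.
rewrite /ff addNr addr0; apply: eq_bigr => i _.
by rewrite /bump.
Qed.

Lemma ffS m k : ff m.+1 k.+1 = k.+1%:R * (ff m k.+1 + ff m k).
Proof.
rewrite ffA /ff big_ord_recr /= subrr expr0n /= mulr0 addr0 mulr_sumr.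
apply: eq_bigr => i _.
have Hi : (i <= k.+1)%N by apply: ltnW; rewrite ltnS; exact: (ltn_ord i).
have E : ('C(k.+1, i) * (k.+1 - i))%N = (k.+1 * 'C(k, i))%N.
  by rewrite mulnC -(mul_bin_down k.+1 i).
have E' : ('C(k.+1, i))%:R * (k.+1%:R - i%:R) = k.+1%:R * ('C(k, i))%:R :> rat.
  by rewrite -natrB // -!natrM E.
rewrite exprS; transitivity ((-1) ^+ i * ((k.+1)%:R - i%:R) ^+ m * ('C(k.+1, i)%:R * (k.+1%:R - i%:R)) : rat); first by ring.
by rewrite E'; ring.
Qed.
Lemma ff_stir m k : ff m k = (k`! * stirling2 m k)%:R.
Proof.
elim: m k => [|m IH] [|k].
- by rewrite /ff big_ord_recl big_ord0 /= addr0 expr0 !mulr1.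
- rewrite /ff /= muln0.
  have := exprDn (1 : rat) (-1) k.+1.
  rewrite subrr expr0n /= => /esym H; rewrite -[RHS]H.
  by apply: eq_bigr => i _; rewrite expr1n mul1r expr0 mulr1 mulr_natr.
- by rewrite /ff big_ord_recl big_ord0 /= subrr expr0n /= mulr0 addr0 muln0.
- rewrite ffS !IH /= factS -!natrD -!natrM; congr (_%:R).
  ring.
Qed.

Lemma cfT_eq n k : cfT n k = \sum_(j < n.+1)
          ('C(n, j))%:R * (- (k%:R / 2%:R)) ^+ j * (stirling2 (n - j) k)%:R.
Proof.
rewrite /cfT.
have -> : \sum_(j < k.+1) (-1) ^+ j * 'C(k, j)%:R * (k%:R / 2%:R - j%:R) ^+ n
   = \sum_(i < k.+1) \sum_(j < n.+1) (-1) ^+ i * 'C(k, i)%:R *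
        (('C(n, j))%:R * (- (k%:R / 2%:R)) ^+ j * (k%:R - i%:R) ^+ (n - j)) :> rat.
  apply: eq_bigr => i _; rewrite -mulr_sumr.
  have -> : k%:R / 2%:R - i%:R = (k%:R - i%:R) + (- (k%:R / 2%:R)) :> rat by field.
  rewrite exprDn; congr (_ * _); apply: eq_bigr => j _.
  rewrite -mulr_natl; move: ((- _) ^+ j) (_ ^+ (n - j)) => a b; ring.
rewrite exchange_big /= mulr_sumr; apply: eq_bigr => j _.
have -> : \sum_(i < k.+1) (-1) ^+ i * 'C(k, i)%:R *
        (('C(n, j))%:R * (- (k%:R / 2%:R)) ^+ j * (k%:R - i%:R) ^+ (n - j))
   = ('C(n, j))%:R * (- (k%:R / 2%:R)) ^+ j * ff (n - j) k :> rat.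
  rewrite /ff mulr_sumr; apply: eq_bigr => i _; ring.
rewrite ff_stir natrM; have Hf : (k`!%:R : rat) != 0 by rewrite pnatr_eq0 -lt0n fact_gt0.
move: (k`!%:R : rat) Hf => f Hf; field; done.
Qed.

Theorem theorem3 (n : nat) :
  centralFubini n =
  \sum_(k < n.+1)
     ((k`!%:R * \sum_(j < n.+1)
          ('C(n, j))%:R * (- (k%:R / 2%:R)) ^+ j * (stirling2 (n - j) k)%:R : rat)
      *: 'X^k).
Proof.
by rewrite /centralFubini; apply: eq_bigr => k _; rewrite cfT_eq.
Qed.
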